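(* Let $U$ be a two-phase quantum walk with one defect. Then $U$ is unitary equivalent to \begin{align*} U_{r_+,r_-,r_0,\mu_1,\mu_2,\mu_3}={}&|e_1^{-1}\rangle\langle r_0e_1^0+e^{i\mu_1}s_0e_2^0|+|e_2^{1}\rangle\langle -e^{i\mu_2}s_0e_1^0+e^{i(\mu_1+\mu_2)}r_0e_2^0|\\ &+\sum_{n\ge1}|e_1^{n-1}\rangle\langle r_+e_1^n+s_+e_2^n|+|e_2^{n+1}\rangle\langle -e^{i\mu_3}s_+e_1^n+e^{i\mu_3}r_+e_2^n|\\ &+\sum_{n\le-1}|e_1^{n-1}\rangle\langle r_-e_1^n+s_-e_2^n|+|e_2^{n+1}\rangle\langle -s_-e_1^n+r_-e_2^n| \end{align*} for some $0\le r_+,r_-,r_0\le1$ and $\mu_1,\mu_2,\mu_3\in\mathbb R$, where $s_\varepsilon=\sqrt{1-r_\varepsilon^2}$ for $\varepsilon=+,-,0$.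
   Context: Let $\mathcal H_n=\mathbb C^2$ for $n\in\mathbb Z$, $\mathcal H=\bigoplus_{n\in\mathbb Z}\mathcal H_n$, $P_n$ the orthogonal projection onto $\mathcal H_n$, and $\{e_1^n,e_2^n\}$ the standard basis of $\mathcal H_n$; each $\mathcal H_n$ is identified with $\mathbb C^2$. Dirac notation: $|x\rangle\langle y|$ is the operator $z\mapsto\langle y,z\rangle x$ (inner product conjugate-linear in the first argument). A one-dimensional quantum walk is a unitary $U$ on $\mathcal H$ with $\operatorname{rank}(P_nUP_m)=1$ if $m=n\pm1$ and $0$ otherwise. Every such $U$ can be written as $U=\sum_{n\in\mathbb Z}|\xi_{n-1,n}\rangle\langle\zeta_{n-1,n}|+|\xi_{n+1,n}\rangle\langle\zeta_{n+1,n}|$, where $\{\xi_{n,n+1},\xi_{n+1,n}\}_{n\in\mathbb Z}$ and $\{\zeta_{n,n+1},\zeta_{n+1,n}\}_{n\in\mathbb Z}$ are orthonormal bases of $\mathcal H$ with $\xi_{n,n+1},\zeta_{n+1,n}\in\mathcal H_n$ and $\xi_{n+1,n},\zeta_{n,n+1}\in\mathcal H_{n+1}$. $U$ is a two-phase quantum walk with one defect if it has such a representation for which there exist $\xi_1^\pm,\xi_2^\pm,\zeta_1^\pm,\zeta_2^\pm\in\mathbb C^2$ with $\xi_{n,n+1}=\xi_1^+$, $\xi_{n,n-1}=\xi_2^+$, $\zeta_{n-1,n}=\zeta_1^+$, $\zeta_{n+1,n}=\zeta_2^+$ for all $n\ge1$, and $\xi_{n,n+1}=\xi_1^-$, $\xi_{n,n-1}=\xi_2^-$,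 $\zeta_{n-1,n}=\zeta_1^-$, $\zeta_{n+1,n}=\zeta_2^-$ for all $n\le-1$. Since $U$ and $e^{i\lambda}U$ are identified, unitaries $U_1,U_2$ on $\mathcal H$ are called unitary equivalent if there exist $\lambda\in\mathbb R$ and a unitary $W=\bigoplus_{n}W_n$ ($W_n$ unitary on $\mathcal H_n$) with $e^{i\lambda}WU_1W^*=U_2$. *)

(* Defs.v *)
From mathcomp Require Import all_boot all_algebra spectral complex.
From mathcomp Require Import reals trigo.
Set Implicit Arguments. Unset Strict Implicit. Unset Printing Implicit Defensive.
Import GRing.Theory Num.Theory.
Local Open Scope ring_scope.
Local Open Scope complex_scope.
Local Open Scope sesquilinear_scope.

(* The Hilbert space H = (+)_{n in Z} C^2.  A (bounded) operator A on H is
   represented by its block matrix: blk A n m = P_n A P_m, viewed as a 2x2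
   complex matrix (H_n and H_m identified with C^2). *)
Definition blockop (R : realType) := int -> int -> 'M[R[i]]_2.

Definition adj (R : realType) (m n : nat) (A : 'M[R[i]]_(m, n)) : 'M[R[i]]_(n, m) :=
  A ^t*.

Definition ketbra (R : realType) (x y : 'cV[R[i]]_2) : 'M[R[i]]_2 := x *m adj y.

(* inner product, conjugate-linear in the first argument: <x,y> = x^* y *)
Definition dotc (R : realType) (x y : 'cV[R[i]]_2) : R[i] := (adj x *m y) 0 0.

Definition e1 (R : realType) : 'cV[R[i]]_2 := delta_mx 0 0.
Definition e2 (R : realType) : 'cV[R[i]]_2 := delta_mx 1 0.

Definition cv2 (R : realType) (a b : R[i]) : 'cV[R[i]]_2 := a *: e1 R + b *: e2 R.

Definition expi (R : realType) (mu : R) : R[i] := (cos mu +i* sin mu).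

Definition RC (R : realType) (x : R) : R[i] := x%:C.

Definition onb2 (R : realType) (x y : 'cV[R[i]]_2) : Prop :=
  [/\ dotc x x = 1, dotc y y = 1 & dotc x y = 0].

(* Because of the band structure, U U^* and U^* U have finite block sums:
   (U^* U)_{n,m} = sum_k U_{k,n}^* U_{k,m}, with k ranging over n-1, n+1.
   Blocks bounded by 1 (consequence of these identities) plus the band
   structure make U a bounded operator, so this is exactly unitarity. *)
Definition is_qw (R : realType) (U : blockop R) : Prop :=
  [/\ (forall n m : int, \rank (U n m) = (if (m == n + 1) || (m == n - 1) then 1%N else 0%N)),
      (forall n m : int,
         adj (U (n - 1) n) *m U (n - 1) m + adj (U (n + 1) n) *m U (n + 1) m
         = (if n == m then 1%:M else 0))
    & (forall n m : int,
         U n (n - 1) *m adj (U m (n - 1)) + U n (n + 1) *m adj (U m (n + 1))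
         = (if n == m then 1%:M else 0))].

(* U = sum_n |xi_{n-1,n}><zeta_{n-1,n}| + |xi_{n+1,n}><zeta_{n+1,n}|, with
   xi_{a,b} in H_a and zeta_{a,b} in H_b; {xi_{n,n+1}, xi_{n,n-1}} and
   {zeta_{n-1,n}, zeta_{n+1,n}} orthonormal bases of H_n (so that the
   families form orthonormal bases of H).  Only the entries xi a b, zeta a b
   with |a - b| = 1 are meaningful. *)
Definition qw_repr (R : realType) (U : blockop R)
    (xi zeta : int -> int -> 'cV[R[i]]_2) : Prop :=
  [/\ (forall n : int, onb2 (xi n (n + 1)) (xi n (n - 1))),
      (forall n : int, onb2 (zeta (n - 1) n) (zeta (n + 1) n))
    & (forall n m : int, U n m =
         (if n == m - 1 then ketbra (xi (m - 1) m) (zeta (m - 1) m)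
          else if n == m + 1 then ketbra (xi (m + 1) m) (zeta (m + 1) m)
          else 0))].

Definition two_phase_one_defect (R : realType) (U : blockop R) : Prop :=
  is_qw U /\
  exists (xi zeta : int -> int -> 'cV[R[i]]_2)
         (xi1p xi2p zeta1p zeta2p xi1m xi2m zeta1m zeta2m : 'cV[R[i]]_2),
    [/\ qw_repr U xi zeta,
        (forall n : int, 1 <= n ->
           [/\ xi n (n + 1) = xi1p, xi n (n - 1) = xi2p,
               zeta (n - 1) n = zeta1p & zeta (n + 1) n = zeta2p])
      & (forall n : int, n <= -1 ->
           [/\ xi n (n + 1) = xi1m, xi n (n - 1) = xi2m,
               zeta (n - 1) n = zeta1m & zeta (n + 1) n = zeta2m])].

(* Unitary equivalence up to a global phase: e^{i lambda} W U1 W^* = U2 with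
   W = (+)_n W_n, W_n unitary on H_n. *)
Definition unitary_equiv (R : realType) (U1 U2 : blockop R) : Prop :=
  exists (lambda : R) (W : int -> 'M[R[i]]_2),
    (forall n : int, W n \is unitarymx) /\
    (forall n m : int, expi lambda *: (W n *m U1 n m *m adj (W m)) = U2 n m).

Definition Unf (R : realType) (rp rm r0 mu1 mu2 mu3 : R) : blockop R :=
  let sp := Num.sqrt (1 - rp ^+ 2) in
  let sm := Num.sqrt (1 - rm ^+ 2) in
  let s0 := Num.sqrt (1 - r0 ^+ 2) in
  fun n m =>
    if m == 0 then
      (if n == -1 then ketbra (e1 R) (cv2 (RC r0) (expi mu1 * RC s0))
       else if n == 1 then ketbra (e2 R) (cv2 (- (expi mu2 * RC s0)) (expi (mu1 + mu2) * RC r0))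
       else 0)
    else if 1 <= m then
      (if n == m - 1 then ketbra (e1 R) (cv2 (RC rp) (RC sp))
       else if n == m + 1 then ketbra (e2 R) (cv2 (- (expi mu3 * RC sp)) (expi mu3 * RC rp))
       else 0)
    else
      (if n == m - 1 then ketbra (e1 R) (cv2 (RC rm) (RC sm))
       else if n == m + 1 then ketbra (e2 R) (cv2 (- RC sm) (RC rm))
       else 0).

(* Main.v *)
Require Import Defs.
From mathcomp Require Import all_boot all_algebra spectral complex.
From mathcomp Require Import reals trigo.
From mathcomp Require Import ring lra order zify.
Import Order.TTheory GRing.Theory Num.Theory.
Local Open Scope ring_scope.

Section E.
Variable R : realType.
Local Open Scope complex_scope.
Lemma expiD (a b : R) : expi a * expi b = expi (a + b).
Proof. rewrite /expi cosD sinD; simpc. congr (_ +i* _); ring. Qed.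
Lemma expiJc (a : R) : expi a * (expi a)^* = 1.
Proof. rewrite /expi; simpc. rewrite -!expr2 cos2Dsin2. congr (_ +i* _); ring. Qed.
Lemma expi_ontoc (z : R[i]) : z * z^* = 1 -> exists mu : R, expi mu = z.
Proof.
case: z => a b; simpc => -[h1 _].
have hb : (b ^+ 2 = 1 - a ^+ 2) by rewrite -h1; ring.
have ha : -1 <= a <= 1.
  have : a ^+ 2 <= 1 by rewrite -h1 lerDl sqr_ge0.
  by move=> h; apply/andP; split; nra.
have hs : Num.sqrt (1 - a ^+ 2) = `|b| by rewrite -hb sqrtr_sqr.
case: (leP 0 b) => hb0.
  exists (acos a); rewrite /expi sin_acos // hs ger0_norm //.
  by rewrite (proj2 (acos_def ha)).
exists (- acos a); rewrite /expi sinN cosN sin_acos // hs ltr0_norm // opprK.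
by rewrite (proj2 (acos_def ha)).
Qed.
End E.

Lemma expiJ (R : realType) (a : R) : expi a * (expi a)^* = 1.
Proof. exact: expiJc. Qed.
Lemma expi_onto (R : realType) (z : R[i]) : z * z^* = 1 -> exists mu : R, expi mu = z.
Proof. exact: expi_ontoc. Qed.

Section M.
Variable R : realType.
Local Notation C := (R[i]).
Implicit Types (x y z w : 'cV[C]_2) (a b c : C).

Lemma adjM m n p (A : 'M[C]_(m,n)) (B : 'M[C]_(n,p)) : adj (A *m B) = adj B *m adj A.
Proof. by rewrite /adj trmx_mul map_mxM. Qed.
Lemma adjZ m n c (A : 'M[C]_(m,n)) : adj (c *: A) = c^* *: adj A.
Proof. by apply/matrixP=> i j; rewrite !mxE rmorphM. Qed.
Lemma adjD m n (A B : 'M[C]_(m,n)) : adj (A + B) = adj A + adj B.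
Proof. by apply/matrixP=> i j; rewrite !mxE rmorphD. Qed.
Lemma adjK m n (A : 'M[C]_(m,n)) : adj (adj A) = A.
Proof. exact: trmxCK. Qed.

Lemma dotcE x y : adj x *m y = (dotc x y)%:M.
Proof. exact: mx11_scalar. Qed.
Lemma ketbra_mul x y z : ketbra x y *m z = dotc y z *: x.
Proof. by rewrite /ketbra -mulmxA dotcE mul_mx_scalar. Qed.
Lemma ketbra_mulmx x y z w : ketbra x y *m ketbra z w = dotc y z *: ketbra x w.
Proof. by rewrite {1}/ketbra mulmxA ketbra_mul /ketbra scalemxAl. Qed.
Lemma ketbraZl c x y : ketbra (c *: x) y = ketbra x (c^* *: y).
Proof. by rewrite /ketbra adjZ -scalemxAl -scalemxAr conjCK. Qed.
Lemma ketbraZr c x y : ketbra x (c *: y) = c^* *: ketbra x y.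
Proof. by rewrite /ketbra adjZ -scalemxAr. Qed.
Lemma adj_ketbra x y : adj (ketbra x y) = ketbra y x.
Proof. by rewrite /ketbra adjM adjK. Qed.
Lemma dotcC x y : dotc y x = (dotc x y)^*.
Proof.
rewrite /dotc -[adj y *m x]adjK adjM adjK.
by rewrite !mxE.
Qed.
Lemma dotcDr x y z : dotc x (y + z) = dotc x y + dotc x z.
Proof. by rewrite /dotc mulmxDr mxE. Qed.
Lemma dotcZr c x y : dotc x (c *: y) = c * dotc x y.
Proof. by rewrite /dotc -scalemxAr mxE. Qed.
Lemma dotcDl x y z : dotc (y + z) x = dotc y x + dotc z x.
Proof. by rewrite /dotc adjD mulmxDl mxE. Qed.
Lemma dotcZl c x y : dotc (c *: y) x = c^* * dotc y x.
Proof. by rewrite /dotc adjZ -scalemxAl mxE. Qed.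

Lemma onb_complete x1 x2 : onb2 x1 x2 -> ketbra x1 x1 + ketbra x2 x2 = 1%:M.
Proof.
case=> h11 h22 h12.
have h21 : dotc x2 x1 = 0 by rewrite dotcC h12 rmorph0.
pose X : 'M[C]_(2, 1 + 1) := row_mx x1 x2.
have hX : adj X = col_mx (adj x1) (adj x2) by rewrite /adj tr_row_mx map_col_mx.
have h1 : adj X *m X = 1%:M.
  by rewrite hX mul_col_row !dotcE h11 h22 h12 h21 (_ : 0%:M = 0) ?raddf0 // -scalar_mx_block.
have h2 : X *m adj X = 1%:M := mulmx1C h1.
by move: h2; rewrite hX mul_row_col.
Qed.

Definition Wm a b x1 x2 : 'M[C]_2 := ketbra (a *: e1 R) x1 + ketbra (b *: e2 R) x2.

Lemma W_apply a b x1 x2 z : Wm a b x1 x2 *m z = cv2 (a * dotc x1 z) (b * dotc x2 z).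
Proof. by rewrite /Wm mulmxDl !ketbra_mul !scalerA /cv2 ![dotc _ z * _]mulrC. Qed.

Lemma scale_cv2 c a b : c *: cv2 a b = cv2 (c * a) (c * b).
Proof. by rewrite /cv2 scalerDr !scalerA. Qed.

Lemma W_x1 a b x1 x2 : onb2 x1 x2 -> Wm a b x1 x2 *m x1 = a *: e1 R.
Proof.
case=> h11 h22 h12; rewrite W_apply h11 dotcC h12 rmorph0 /cv2 !mulr0 mulr1 scale0r addr0 //.
Qed.
Lemma W_x2 a b x1 x2 : onb2 x1 x2 -> Wm a b x1 x2 *m x2 = b *: e2 R.
Proof.
case=> h11 h22 h12; rewrite W_apply h22 h12 /cv2 !mulr0 mulr1 scale0r add0r //.
Qed.

Lemma e_complete : ketbra (e1 R) (e1 R) + ketbra (e2 R) (e2 R) = 1%:M.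
Proof.
apply/matrixP=> i j; rewrite !mxE !big_ord1 !mxE.
by case: i => [[|[|?]] ?] //; case: j => [[|[|?]] ?] //=; rewrite ?rmorph0 ?rmorph1; simpc.
Qed.

Lemma W_unitary a b x1 x2 : a * a^* = 1 -> b * b^* = 1 -> onb2 x1 x2 ->
  Wm a b x1 x2 \is unitarymx.
Proof.
move=> ha hb [h11 h22 h12].
have h21 : dotc x2 x1 = 0 by rewrite dotcC h12 rmorph0.
apply/unitarymxP; rewrite -/(adj _) /Wm adjD !adj_ketbra mulmxDl !mulmxDr !ketbra_mulmx.
rewrite h11 h22 h12 h21 !scale0r addr0 add0r !scale1r !ketbraZl !ketbraZr !scalerA conjCK.
by rewrite conjCK ha hb !scale1r e_complete.
Qed.

Lemma conj_ketbra (W W' : 'M[C]_2) x z : W *m ketbra x z *m adj W' = ketbra (W *m x) (W' *m z).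
Proof. by rewrite /ketbra adjM !mulmxA. Qed.

Lemma scale_ketbra (L a : C) e v : L *: ketbra (a *: e) v = ketbra e ((L * a)^* *: v).
Proof. by rewrite ketbraZl !ketbraZr !conjCK scalerA. Qed.

Lemma unit22 (A B Cc D : C) : A^* * A + B^* * B = 1 -> Cc^* * Cc + D^* * D = 1 ->
  A^* * Cc + B^* * D = 0 ->
  [/\ Cc = - ((A * D - B * Cc) * B^*), D = (A * D - B * Cc) * A^* &
      (A * D - B * Cc) * (A * D - B * Cc)^* = 1].
Proof.
move=> h1 h2 h3.
have hC : Cc = - ((A * D - B * Cc) * B^*).
  apply/eqP; rewrite -subr_eq0.
  have -> : Cc - - ((A * D - B * Cc) * B^*) = A * (A^* * Cc + B^* * D) - Cc * (A^* * A + B^* * B - 1) by ring.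
  by rewrite h3 h1 subrr !mulr0 subrr.
have hD : D = (A * D - B * Cc) * A^*.
  apply/eqP; rewrite -subr_eq0.
  have -> : D - (A * D - B * Cc) * A^* = B * (A^* * Cc + B^* * D) - D * (A^* * A + B^* * B - 1) by ring.
  by rewrite h3 h1 subrr !mulr0 subrr.
split => //.
suff aux : forall d Cc' D', Cc' = - (d * B^*) -> D' = d * A^* ->
  Cc'^* * Cc' + D'^* * D' = 1 -> d * d^* = 1 by exact: (aux _ _ _ hC hD h2).
move=> d Cc' D' -> ->; rewrite !rmorphN !rmorphM /= !conjCK => h2'.
rewrite -h2' -[LHS]mulr1 -h1; ring.
Qed.

Definition ph (z : C) : C := if z == 0 then 1 else z / `|z|.

Lemma norm_conj (z : C) : `|z|^* = `|z|.
Proof. by rewrite conj_Creal // normr_real. Qed.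

Lemma ph_unit (z : C) : ph z * (ph z)^* = 1.
Proof.
rewrite /ph; case: eqP => [_|hz]; first by rewrite rmorph1 mulr1.
have hn : `|z| != 0 by rewrite normr_eq0; apply/eqP.
rewrite rmorphM rmorphV ?unitfE // /= norm_conj.
by rewrite mulrACA -normCK -invfM -expr2 mulfV // expf_neq0.
Qed.

Lemma phJ_z (z : C) : (ph z)^* * z = `|z|.
Proof.
rewrite /ph; case: eqP => [->|hz]; first by rewrite mulr0 normr0.
have hn : `|z| != 0 by rewrite normr_eq0; apply/eqP.
rewrite rmorphM rmorphV ?unitfE // /= norm_conj.
rewrite mulrAC [z^* * z]mulrC -normCK expr2 mulfK //.
Qed.

Lemma ph_zJ (z : C) : ph z * z^* = `|z|.
Proof. by rewrite -[ph z]conjCK -rmorphM /= phJ_z norm_conj. Qed.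

Lemma ph_dec (z : C) : z = ph z * `|z|.
Proof.
rewrite /ph; case: eqP => [->|hz]; first by rewrite normr0 mulr0.
have hn : `|z| != 0 by rewrite normr_eq0; apply/eqP.
by rewrite mulfVK.
Qed.

Lemma phJ_dec (z : C) : z^* = (ph z)^* * `|z|.
Proof. by rewrite {1}[z]ph_dec rmorphM /= norm_conj. Qed.


Lemma RC_norm (z : C) : RC (complex.Re `|z|) = `|z|.
Proof. by rewrite /RC RRe_real // normr_real. Qed.

Lemma Re_norm_ge0 (z : C) : 0 <= complex.Re `|z|.
Proof. by rewrite -(@ler0c R) -[X in _ <= X]/(RC _) RC_norm. Qed.

Lemma sq_comp (A B : C) : A^* * A + B^* * B = 1 ->
  (complex.Re `|A|) ^+ 2 + (complex.Re `|B|) ^+ 2 = 1.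
Proof.
move=> h; apply: (@complexI R).
rewrite -[X in X = _]/(RC _) /RC rmorphD !rmorphXn /= -!/(RC _) !RC_norm !normCK.
by rewrite [A * _]mulrC [B * _]mulrC h.
Qed.

Lemma sqrt_comp (A B : C) : A^* * A + B^* * B = 1 ->
  Num.sqrt (1 - (complex.Re `|A|) ^+ 2) = complex.Re `|B|.
Proof.
move=> /sq_comp h; rewrite -h addrAC subrr add0r sqrtr_sqr ger0_norm //.
exact: Re_norm_ge0.
Qed.

Lemma Re_norm_le1 (A B : C) : A^* * A + B^* * B = 1 -> 0 <= complex.Re `|A| <= 1.
Proof.
move=> /sq_comp h; have h1 := Re_norm_ge0 A; have h2 := Re_norm_ge0 B.
apply/andP; split => //; nra.
Qed.

Lemma cancel_unit (L a x : C) : L * L^* = 1 -> a * a^* = 1 -> (L * a)^* * (a * L * x) = x.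
Proof.
move=> hL ha; rewrite rmorphM /=.
transitivity ((L * L^*) * (a * a^*) * x); first ring.
by rewrite hL ha !mul1r.
Qed.

Lemma onb_expand x1 x2 z : onb2 x1 x2 -> z = dotc x1 z *: x1 + dotc x2 z *: x2.
Proof.
move=> h; rewrite -[z in LHS]mul1mx -(onb_complete _ _ h) mulmxDl !ketbra_mul //.
Qed.

Lemma gram x1 x2 z w : onb2 x1 x2 ->
  dotc z w = (dotc x1 z)^* * dotc x1 w + (dotc x2 z)^* * dotc x2 w.
Proof.
move=> h; have ez := onb_expand _ _ z h; have ew := onb_expand _ _ w h.
case: h => h11 h22 h12.
have h21 : dotc x2 x1 = 0 by rewrite dotcC h12 rmorph0.
rewrite [in LHS]ez [in LHS]ew !dotcDl !dotcZl !dotcDr !dotcZr h11 h22 h12 h21.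
ring.
Qed.

Lemma col_rel x1 x2 z1 z2 : onb2 x1 x2 -> onb2 z1 z2 ->
  [/\ (dotc x1 z1)^* * dotc x1 z1 + (dotc x2 z1)^* * dotc x2 z1 = 1,
      (dotc x1 z2)^* * dotc x1 z2 + (dotc x2 z2)^* * dotc x2 z2 = 1 &
      (dotc x1 z1)^* * dotc x1 z2 + (dotc x2 z1)^* * dotc x2 z2 = 0].
Proof.
move=> hx [h11 h22 h12].
by rewrite -!(gram _ _ _ _ hx) h11 h22 h12.
Qed.

End M.
Arguments ph {R}.
Arguments Wm {R}.

Lemma unitM (R : realType) (a b : R[i]) : a * a^* = 1 -> b * b^* = 1 -> (a * b) * (a * b)^* = 1.
Proof. move=> ha hb; rewrite rmorphM /=; transitivity ((a * a^*) * (b * b^*)); first ring. by rewrite ha hb mulr1. Qed.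
Lemma unitJ (R : realType) (a : R[i]) : a * a^* = 1 -> a^* * a^*^* = 1.
Proof. by rewrite conjCK mulrC. Qed.


Lemma down_gen (R : realType) (L a q d B : R[i]) : a * a^* = 1 ->
  (L * (a * L * q^*))^* * (a * - (d * B^*)) = - ((L^* * L^* * d) * (q * B^*)).
Proof.
move=> ha; rewrite !rmorphM /= conjCK.
transitivity (- ((a * a^*) * (L^* * L^* * d) * (q * B^*))); first ring.
by rewrite ha mul1r.
Qed.

Lemma down_gen2 (R : realType) (L a p q d A : R[i]) : a * a^* = 1 -> L * L^* = 1 ->
  q * q^* = 1 ->
  (L * (a * (L * p^*) * L * q^*))^* * (a * L * q^* * (d * A^*)) = (L^* * L^* * d) * (p * A^*).
Proof.
move=> ha hL hq; rewrite !rmorphM /= !conjCK.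
transitivity ((a * a^*) * (L * L^*) * (q * q^*) * (L^* * L^* * d) * (p * A^*)); first ring.
by rewrite ha hL hq !mul1r.
Qed.



Lemma kc (R : realType) (e : 'cV[R[i]]_2) (a b c d : R[i]) : a = c -> b = d ->
  ketbra e (cv2 a b) = ketbra e (cv2 c d).
Proof. by move=> -> ->. Qed.

Lemma ia1 (m : int) : (m == 0) = false -> (1 <= m) = false -> m <= -1.
Proof. lia. Qed.
Lemma ia2 (m : int) : (m + 1 == m - 1) = false.
Proof. lia. Qed.
Lemma ia3 (n : int) : n != 0 - 1 -> n != 0 + 1 -> (n == -1) = false /\ (n == 1) = false.
Proof. lia. Qed.
Lemma ia4 (m : int) : m <= -1 -> (1 <= m + 1) = false.
Proof. lia. Qed.
Lemma ia6 : (1 <= (0 : int)) = false.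
Proof. lia. Qed.
Lemma ia7 : (0 + 1 - 1 : int) = 0.
Proof. lia. Qed.
Lemma ia8 : (1 <= (0 + 1 : int)).
Proof. lia. Qed.
Lemma ia5' (m : int) : 1 <= m -> 1 <= m + 1.
Proof. lia. Qed.
Lemma ia5 (m : int) : 1 <= m -> (1 <= m + 1) = true.
Proof. lia. Qed.

Lemma down0 (R : realType) (L q p r d A s : R[i]) : L * L^* = 1 -> s * s^* = 1 ->
  (L * (1 * L * q^*))^* * (L^* * p * L * r^* * (d * A^*)) =
  (r^* * s) * (L^* * L^* * q * d * s^*) * (p * A^*).
Proof.
move=> hL hs; rewrite !rmorphM /= !conjCK rmorph1.
transitivity ((L * L^*) * (L^* * L^* * q * p * r^* * d * A^*)); first ring.
rewrite hL mul1r.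
transitivity ((s * s^*) * (L^* * L^* * q * p * r^* * d * A^*)); first by rewrite hs mul1r.
ring.
Qed.

Theorem theorem2p7 (R : realType) (U : blockop R) :
  two_phase_one_defect U ->
  exists (rp rm r0 mu1 mu2 mu3 : R),
    [/\ 0 <= rp <= 1, 0 <= rm <= 1, 0 <= r0 <= 1
      & unitary_equiv U (Unf rp rm r0 mu1 mu2 mu3)].
Proof.
case=> _ [xi [zeta [xi1p [xi2p [zeta1p [zeta2p [xi1m [xi2m [zeta1m [zeta2m [[hxi hzeta hU] hp hm]]]]]]]]]]].
pose A m := dotc (xi m (m+1)) (zeta (m-1) m).
pose B m := dotc (xi m (m-1)) (zeta (m-1) m).
pose Cc m := dotc (xi m (m+1)) (zeta (m+1) m).
pose D m := dotc (xi m (m-1)) (zeta (m+1) m).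
pose dl m := A m * D m - B m * Cc m.
have hrel m : [/\ (A m)^* * A m + (B m)^* * B m = 1, Cc m = - (dl m * (B m)^*),
   D m = dl m * (A m)^* & dl m * (dl m)^* = 1].
  have [h1 h2 h3] := col_rel _ _ _ _ _ (hxi m) (hzeta m).
  by have [h4 h5 h6] := unit22 _ _ _ _ _ h1 h2 h3.
have hpos m : 1 <= m -> [/\ A m = A 1, B m = B 1, Cc m = Cc 1 & D m = D 1].
  move=> h; rewrite /A /B /Cc /D.
  by case: (hp m h) => -> -> -> ->; case: (hp 1 (lexx _)) => -> -> -> ->.
have hneg m : m <= -1 -> [/\ A m = A (-1), B m = B (-1), Cc m = Cc (-1) & D m = D (-1)].
  move=> h; rewrite /A /B /Cc /D.
  by case: (hm m h) => -> -> -> ->; case: (hm (-1) (lexx _)) => -> -> -> ->.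
have [th hth] : exists th, expi th = dl (-1) by case: (hrel (-1)) => _ _ _ hd; exact: expi_onto.
pose lam := th / 2; pose L := expi lam.
have hLL : L * L = dl (-1) by rewrite /L /lam expiD -splitr.
have hL : L * L^* = 1 := expiJ _ lam.
pose wp := L * (ph (A 1))^*; pose wm := L * (ph (A (-1)))^*; pose ka := L^* * ph (A 0).
have hwp : wp * wp^* = 1 by apply: unitM; [exact: hL | apply: unitJ; exact: ph_unit].
have hwm : wm * wm^* = 1 by apply: unitM; [exact: hL | apply: unitJ; exact: ph_unit].
have hka : ka * ka^* = 1 by apply: unitM; [exact: unitJ | exact: ph_unit].
pose al (m : int) := match m with Posz k => wp ^+ k | Negz k => ka * (wm^*) ^+ k end.
have al_unit m : al m * (al m)^* = 1.
  case: m => k /=; rewrite ?rmorphXn -?exprMn.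
    by rewrite /= hwp expr1n.
  apply: unitM; first exact: hka.
  by rewrite rmorphXn -exprMn /= conjCK mulrC hwm expr1n.
have al_pos m : 1 <= m -> al m = al (m - 1) * wp.
  case: m => [[|k]|k] h //.
  by rewrite (_ : Posz k.+1 - 1 = k) /= ?exprSr //; lia.
have al_neg m : m <= -1 -> al m = al (m - 1) * wm.
  case: m => [k|k] h; first by move: h; lia.
  rewrite (_ : Negz k - 1 = Negz k.+1) /=; last by lia.
  rewrite exprSr /ka; transitivity (L^* * ph (A 0) * wm^* ^+ k * (wm^* * wm)); last by ring.
  by rewrite [wm^* * wm]mulrC hwm mulr1 ?mulrA.
pose be m := if 1 <= m then al (m - 1) * L * (ph (B 1))^* else al (m - 1) * L * (ph (B (-1)))^*.
have be_unit m : be m * (be m)^* = 1.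
  rewrite /be; case: ifP => _; (apply: unitM; [apply: unitM; [exact: al_unit | exact: hL] | apply: unitJ; exact: ph_unit]).
pose W n := Wm (al n) (be n) (xi n (n+1)) (xi n (n-1)).
have up m : expi lam *: (W (m-1) *m U (m-1) m *m adj (W m)) =
   ketbra (e1 R) (cv2 ((L * al (m-1))^* * (al m * A m)) ((L * al (m-1))^* * (be m * B m))).
  have hx := hxi (m-1); rewrite subrK in hx.
  rewrite hU eqxx conj_ketbra /W subrK W_x1 // scale_ketbra W_apply scale_cv2 //.
have down m : expi lam *: (W (m+1) *m U (m+1) m *m adj (W m)) =
   ketbra (e2 R) (cv2 ((L * be (m+1))^* * (al m * Cc m)) ((L * be (m+1))^* * (be m * D m))).
  have hx := hxi (m+1); rewrite addrK in hx.
  rewrite hU (_ : (m + 1 == m - 1) = false); last by lia.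
  rewrite eqxx conj_ketbra /W addrK W_x2 // scale_ketbra W_apply scale_cv2 //.
have hrelp := hrel 1; have hrelm := hrel (-1); have hrel0 := hrel 0.
case: hrelp => hnp hCp hDp hdp; case: hrelm => hnm hCm hDm hdm; case: hrel0 => hn0 hC0 hD0 hd0.
have [mu3 hmu3] : exists mu3, expi mu3 = L^* * L^* * dl 1.
  apply: expi_onto; apply: unitM; last exact: hdp.
  apply: unitM; exact: unitJ.
have [mu1 hmu1] : exists mu1, expi mu1 = (ph (B (-1)))^* * ph (B 0).
  apply: expi_onto; apply: unitM; [exact/unitJ/ph_unit | exact: ph_unit].
have [mu2 hmu2] : exists mu2, expi mu2 = L^* * L^* * ph (B 1) * dl 0 * (ph (B 0))^*.
  apply: expi_onto; apply: unitM; last exact/unitJ/ph_unit.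
  apply: unitM; last exact: hd0.
  apply: unitM; last exact: ph_unit.
  apply: unitM; exact: unitJ.
exists (complex.Re `|A 1|), (complex.Re `|A (-1)|), (complex.Re `|A 0|), mu1, mu2, mu3.
split; [exact: Re_norm_le1 hnp | exact: Re_norm_le1 hnm | exact: Re_norm_le1 hn0 |].
exists lam, W; split.
  move=> n; apply: W_unitary; [exact: al_unit | exact: be_unit | exact: hxi].
move=> n m.
have al0 : al 0 = 1 := erefl.
have alm1 : al (0 - 1) = ka := mulr1 ka.
have kaE : ka = L^* * ph (A 0) := erefl.
have wpE : wp = L * (ph (A 1))^* := erefl.
have wmE : wm = L * (ph (A (-1)))^* := erefl.
have be_pos k : 1 <= k -> be k = al (k - 1) * L * (ph (B 1))^*.
  move=> h; rewrite /be h; reflexivity.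
have be_neg k : (1 <= k) = false -> be k = al (k - 1) * L * (ph (B (-1)))^*.
  move=> h; rewrite /be h; reflexivity.
clearbody W be al ka wm wp L dl A B Cc D lam.
have be0 : be 0 = al (0 - 1) * L * (ph (B (-1)))^*.
  rewrite (be_neg _ ia6); reflexivity.
have be1 : be (0 + 1) = 1 * L * (ph (B 1))^*.
  rewrite (be_pos _ ia8) ia7 al0; reflexivity.
have h11 : (1 : R[i]) * 1^* = 1.
  rewrite rmorph1 mulr1; reflexivity.
have hE : L^* * L^* * dl (-1) = 1.
  rewrite -hLL; transitivity ((L * L^*) * (L * L^*)); first ring.
  rewrite hL mul1r; reflexivity.
have [->|hn1] := eqVneq n (m-1).
  rewrite up /Unf; case: ifP => [/eqP m0|hm0].
    subst m; rewrite (_ : (0 - 1 == -1) = true); last reflexivity.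
    apply: kc.
      rewrite alm1 al0 mul1r kaE mulrA hL mul1r phJ_z RC_norm; reflexivity.
    rewrite be0 alm1 -(mulrA (ka * L)) (cancel_unit _ _ _ _ hL hka).
    rewrite hmu1 (sqrt_comp _ _ _ hn0) RC_norm {1}(ph_dec _ (B 0)) mulrA; reflexivity.
  case: ifP => hm1; rewrite eqxx; apply: kc.
        case: (hpos m hm1) => eA eB _ _.
        rewrite (al_pos m hm1) wpE eA (mulrA (al (m-1)) L) -(mulrA (al (m-1) * L)).
        rewrite (cancel_unit _ _ _ _ hL (al_unit _)) phJ_z RC_norm; reflexivity.
      case: (hpos m hm1) => eA eB _ _.
      have bem : be m = al (m-1) * L * (ph (B 1))^*.
  rewrite (be_pos _ hm1); reflexivity.
      rewrite bem eB -(mulrA (al (m-1) * L)) (cancel_unit _ _ _ _ hL (al_unit _)).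
      rewrite phJ_z (sqrt_comp _ _ _ hnp) RC_norm; reflexivity.
    have hmn := ia1 _ hm0 hm1.
    case: (hneg m hmn) => eA eB _ _.
    rewrite (al_neg m hmn) wmE eA (mulrA (al (m-1)) L) -(mulrA (al (m-1) * L)).
    rewrite (cancel_unit _ _ _ _ hL (al_unit _)) phJ_z RC_norm; reflexivity.
  have hmn := ia1 _ hm0 hm1.
  case: (hneg m hmn) => eA eB _ _.
  have bem : be m = al (m-1) * L * (ph (B (-1)))^*.
  rewrite (be_neg _ hm1); reflexivity.
  rewrite bem eB -(mulrA (al (m-1) * L)) (cancel_unit _ _ _ _ hL (al_unit _)).
  rewrite phJ_z (sqrt_comp _ _ _ hnm) RC_norm; reflexivity.
have [->|hn2] := eqVneq n (m+1).
  rewrite down /Unf; case: ifP => [/eqP m0|hm0].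
    subst m; rewrite (_ : (0 + 1 == -1) = false); last reflexivity.
    rewrite (_ : (0 + 1 == 1) = true); last reflexivity.
    apply: kc.
      rewrite be1 al0 hC0 (down_gen _ _ _ _ _ _ h11) hmu2 (sqrt_comp _ _ _ hn0) RC_norm.
      rewrite (phJ_dec _ (B 0)); ring.
    rewrite be1 be0 alm1 hD0 -expiD hmu1 hmu2 RC_norm kaE -(ph_zJ _ (A 0)).
    exact: (down0 _ _ _ _ _ _ _ _ hL (ph_unit _ _)).
  rewrite ia2.
  case: ifP => hm1; rewrite eqxx; apply: kc.
        case: (hpos m hm1) => _ _ eC _.
        have bep : be (m+1) = al m * L * (ph (B 1))^*.
  rewrite (be_pos _ (ia5' _ hm1)) addrK; reflexivity.
        rewrite bep eC hCp (down_gen _ _ _ _ _ _ (al_unit m)) hmu3 (sqrt_comp _ _ _ hnp) RC_norm.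
        rewrite -(ph_zJ _ (B 1)); reflexivity.
      case: (hpos m hm1) => _ _ _ eD.
      have bep : be (m+1) = al m * L * (ph (B 1))^*.
  rewrite (be_pos _ (ia5' _ hm1)) addrK; reflexivity.
      have bem : be m = al (m-1) * L * (ph (B 1))^*.
  rewrite (be_pos _ hm1); reflexivity.
      rewrite bep bem (al_pos m hm1) wpE eD hDp (down_gen2 _ _ _ _ _ _ _ (al_unit _) hL (ph_unit _ _)).
      rewrite hmu3 RC_norm -(ph_zJ _ (A 1)); reflexivity.
    have hmn := ia1 _ hm0 hm1.
    case: (hneg m hmn) => _ _ eC _.
    have bep : be (m+1) = al m * L * (ph (B (-1)))^*.
  rewrite (be_neg _ (ia4 _ hmn)) addrK; reflexivity.
    rewrite bep eC hCm (down_gen _ _ _ _ _ _ (al_unit m)) hE mul1r (sqrt_comp _ _ _ hnm) RC_norm.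
    rewrite -(ph_zJ _ (B (-1))); reflexivity.
  have hmn := ia1 _ hm0 hm1.
  case: (hneg m hmn) => _ _ _ eD.
  have bep : be (m+1) = al m * L * (ph (B (-1)))^*.
  rewrite (be_neg _ (ia4 _ hmn)) addrK; reflexivity.
  have bem : be m = al (m-1) * L * (ph (B (-1)))^*.
  rewrite (be_neg _ hm1); reflexivity.
  rewrite bep bem (al_neg m hmn) wmE eD hDm (down_gen2 _ _ _ _ _ _ _ (al_unit _) hL (ph_unit _ _)).
  rewrite hE mul1r RC_norm -(ph_zJ _ (A (-1))); reflexivity.
rewrite hU (negbTE hn1) (negbTE hn2) mulmx0 mul0mx scaler0 /Unf.
case: ifP => [/eqP m0|_].
  subst m; case: (ia3 _ hn1 hn2) => -> ->; reflexivity.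
rewrite (negbTE hn1) (negbTE hn2); case: ifP => _; reflexivity.
Qed.
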